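(* Let $\sigma$ be a non-negative integer and $f\in H^2_\sigma(\mathbb{D})$. Then for every $a\in\mathbb{D}$ there is a constant $C(\sigma,a)$, depending only on $\sigma$ and $a$, such that for all integers $n\ge 1$ $$\left|\left\langle f,\frac{k_{n,a}}{\|k_{n,a}\|}\right\rangle\right|\le C(\sigma,a)\,\frac{1}{n^{\sigma}}\,\|f\|_{H^2_\sigma}.$$
   Context: $\mathbb{D}$ is the open unit disc; $H^2(\mathbb{D})$ the Hardy space with inner product $\langle f,g\rangle=\frac{1}{2\pi}\int_0^{2\pi}f(e^{it})\overline{g(e^{it})}\,dt$ (for $f=\sum c_kz^k$, $\|f\|^2=\sum|c_k|^2$). For $n\in\mathbb{N}$, $a\in\mathbb{D}$: $k_{n,a}(z)=\left(\frac{\partial}{\partial\overline{a}}\right)^n\frac{1}{1-\overline{a}z}=\frac{n!\,z^n}{(1-\overline{a}z)^{n+1}}$. For $\sigma\ge 0$ the Hardy–Sobolev space is $H^2_\sigma(\mathbb{D})=\{f(z)=\sum_{k\ge0}c_kz^k:\ \sum_{k\ge0}|(1+k^\sigma)c_k|^2<\infty\}$ with $\|f\|_{H^2_\sigma}=\left(\sum_{k\ge0}|(1+k^\sigma)c_k|^2\right)^{1/2}$. *)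

(* Defs.v *)
From Stdlib Require Import Reals.
From Coquelicot Require Import Coquelicot.
Open Scope R_scope.

(* An element f(z) = sum_k c_k z^k of H^2(D) (or of a subspace of it) is
   represented by its Taylor coefficient sequence c : nat -> C. *)

Definition H2inner (c d : nat -> C) : C :=
  (Series (fun k => Re (c k * Cconj (d k))%C),
   Series (fun k => Im (c k * Cconj (d k))%C)).

Definition H2norm (d : nat -> C) : R :=
  sqrt (Series (fun k => Cmod (d k) ^ 2)).

Definition sob_weight (sigma k : nat) : R := 1 + INR k ^ sigma.

Definition in_H2sigma (sigma : nat) (c : nat -> C) : Prop :=
  ex_series (fun k => (sob_weight sigma k * Cmod (c k)) ^ 2).

Definition H2sigma_norm (sigma : nat) (c : nat -> C) : R :=
  sqrt (Series (fun k => (sob_weight sigma k * Cmod (c k)) ^ 2)).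

(* Taylor coefficients of k_{n,a}(z) = n! z^n / (1 - conj(a) z)^(n+1)
   = sum_{m >= n} n! * binom(m,n) * conj(a)^(m-n) z^m,
   and n! * binom(m,n) = m! / (m-n)!. *)
Definition kcoef (n : nat) (a : C) (m : nat) : C :=
  if (n <=? m)%nat
  then (RtoC (INR (Factorial.fact m) / INR (Factorial.fact (m - n))) * Cpow (Cconj a) (m - n))%C
  else RtoC 0.

Definition kcoef_normalized (n : nat) (a : C) (m : nat) : C :=
  (kcoef n a m / RtoC (H2norm (kcoef n a)))%C.

(* Main.v *)
Require Import Defs.
From Stdlib Require Import Reals Lra Lia Psatz.
From Coquelicot Require Import Coquelicot.
Open Scope R_scope.

Lemma Series_zero : Series (fun _ => 0) = 0.
Proof.
  rewrite (Series_ext _ (fun n => 0 * 0)) by (intros; ring).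
  rewrite Series_scal_l. ring.
Qed.

Lemma Series_le_gen (a b : nat -> R) :
  ex_series a -> ex_series b -> (forall n, a n <= b n) -> Series a <= Series b.
Proof.
  intros Ha Hb H.
  assert (0 <= Series (fun n => b n - a n)).
  { rewrite <- Series_zero. apply Series_le.
    - intros; split; [lra|]. specialize (H n); lra.
    - apply (ex_series_minus b a); auto. }
  rewrite Series_minus in H0 by auto. lra.
Qed.

Lemma ratio_series (u : nat -> R) (q : R) (J : nat) :
  0 <= q < 1 -> (forall j, 0 <= u j) ->
  (forall j, (J <= j)%nat -> u (S j) <= q * u j) -> ex_series u.
Proof.
  intros Hq Hu Hr.
  apply (proj2 (ex_series_incr_n u J)).
  apply (@ex_series_le R_AbsRing R_CompleteNormedModule _ (fun k => u J * q ^ k)).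
  - intros k. change (norm (u (J+k)%nat)) with (Rabs (u (J+k)%nat)).
    rewrite Rabs_pos_eq by apply Hu.
    induction k.
    + rewrite Nat.add_0_r. simpl; lra.
    + replace (J + S k)%nat with (S (J + k)) by lia.
      eapply Rle_trans. apply Hr. lia.
      simpl. pose proof (Hu (J+k)%nat). nra.
  - apply (ex_series_scal_l (u J) (fun k => q ^ k)). apply ex_series_geom.
    rewrite Rabs_pos_eq; lra.
Qed.

Lemma INR_fact_pos k : 0 < INR (Factorial.fact k).
Proof. apply lt_0_INR, Factorial.lt_O_fact. Qed.

Lemma kcoef_lt n a m : (m < n)%nat -> kcoef n a m = RtoC 0.
Proof. intros H. unfold kcoef. destruct (Nat.leb_spec n m); [lia|auto]. Qed.

Lemma kcoef_mod n a j :
  Cmod (kcoef n a (n + j)) = INR (Factorial.fact (n+j)) / INR (Factorial.fact j) * Cmod a ^ j.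
Proof.
  unfold kcoef. destruct (Nat.leb_spec n (n+j)); [|lia].
  replace (n + j - n)%nat with j by lia.
  rewrite Cmod_mult, Cmod_R, Cmod_pow, Cmod_conj.
  rewrite Rabs_pos_eq; auto.
  apply Rle_mult_inv_pos; [apply pos_INR| apply INR_fact_pos].
Qed.

Lemma kcoef_sq_series n a : Cmod a < 1 ->
  ex_series (fun m => Cmod (kcoef n a m) ^ 2).
Proof.
  intros Ha.
  apply (proj2 (ex_series_incr_n _ n)).
  set (r := Cmod a). assert (0 <= r) by apply Cmod_ge_0.
  set (mu := (1 + r) / 2).
  assert (He : (1 - r)/2 > 0) by (unfold r in *; lra).
  destruct (INR_archimed ((1 - r)/2) (INR n * r) He) as [J HJ].
  apply (ratio_series _ (mu ^ 2) J).
  - unfold mu. split; nra.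
  - intros; apply pow2_ge_0.
  - intros j Hj. rewrite !kcoef_mod.
    replace (n + S j)%nat with (S (n + j)) by lia.
    rewrite !fact_simpl, !mult_INR.
    pose proof (INR_fact_pos (n+j)). pose proof (INR_fact_pos j).
    assert (HJj : INR J <= INR j) by (apply le_INR; lia).
    rewrite !S_INR, plus_INR. simpl pow.
    set (F := INR (Factorial.fact (n + j))) in *. set (G := INR (Factorial.fact j)) in *.
    set (x := INR j + 1).
    assert (Hx : 0 < x) by (unfold x; pose proof (pos_INR j); lra).
    fold r.
    replace ((INR n + INR j + 1) * F / (x * G) * (r * r ^ j))
      with ((INR n + x) * r / x * (F / G * r ^ j)).
    2:{ unfold x. field. split; unfold G, x in *; lra. }
    assert (Hk : (INR n + x) * r / x <= mu).
    { apply (Rmult_le_reg_r x); auto. unfold Rdiv. rewrite Rmult_assoc, Rinv_l by lra.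
      unfold mu, x in *. assert ((INR j + 1 - INR J) * (1 - r) >= 0) by nra. nra. }
    assert (0 <= (INR n + x) * r / x).
    { apply Rle_mult_inv_pos; auto. pose proof (pos_INR n); nra. }
    assert (0 <= F / G * r ^ j).
    { apply Rmult_le_pos. apply Rle_mult_inv_pos; lra. apply pow_le; auto. }
    set (y := F / G * r ^ j) in *. set (k := (INR n + x) * r / x) in *.
    replace (k * y * (k * y * 1)) with ((k*k) * (y*(y*1))) by ring.
    replace (mu * (mu * 1) * (y * (y * 1))) with ((mu*mu) * (y*(y*1))) by ring.
    apply Rmult_le_compat_r. nra. nra.
Qed.

Lemma fin_lemma (x s B : R) : 0 < s -> 0 <= B ->
  (forall t, 0 < t -> x <= /2 * (t / (s*s) * B + / t)) -> x <= / s * sqrt B.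
Proof.
  intros Hs HB H.
  destruct (Req_dec B 0) as [->|HB0].
  - rewrite sqrt_0, Rmult_0_r. destruct (Rle_lt_dec x 0); auto.
    specialize (H (/ x) ltac:(apply Rinv_0_lt_compat; lra)).
    rewrite Rmult_0_r, Rplus_0_l, Rinv_inv in H. lra.
  - assert (HsB : 0 < sqrt B) by (apply sqrt_lt_R0; lra).
    specialize (H (s / sqrt B) ltac:(apply Rdiv_lt_0_compat; lra)).
    replace (/ 2 * (s / sqrt B / (s * s) * B + / (s / sqrt B))) with (/ s * sqrt B) in H; auto.
    set (y := sqrt B) in *. assert (HyB : y*y = B) by (apply sqrt_sqrt; lra).
    clearbody y. subst B. field. split; lra.
Qed.

Lemma pq_lemma (p q w : R) (v : C) :
  p * Re v + q * Im v <= sqrt (p^2 + q^2) * Cmod v.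
Proof.
  unfold Cmod, Re, Im. destruct v as [x y]. simpl fst; simpl snd.
  rewrite <- sqrt_mult by nra.
  eapply Rle_trans. apply Rle_abs. rewrite <- sqrt_Rsqr_abs.
  apply sqrt_le_1_alt. unfold Rsqr. assert (0 <= (p*y - q*x)^2) by apply pow2_ge_0. nra.
Qed.

Lemma exs_scal (c : R) (a : nat -> R) : ex_series a -> ex_series (fun m => c * a m).
Proof. intros H. exact (ex_series_scal_l c a H). Qed.

Lemma amgm (al k W t s N : R) : 0 <= al -> 0 <= k -> 0 < t -> 0 < s -> 0 < N -> s * al <= W ->
  al * (k / N) <= /2 * (t / (s*s) * W^2 + /(t*(N*N)) * k^2).
Proof.
  intros Ha Hk Ht Hs HN HW.
  set (X := W / s). set (be := k / N).
  assert (al <= X). { unfold X. apply (Rmult_le_reg_l s); auto. field_simplify; lra. }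
  assert (0 <= be) by (unfold be; apply Rle_mult_inv_pos; lra).
  replace (/2 * (t / (s*s) * W^2 + /(t*(N*N)) * k^2)) with (/2 * (t * X^2 + / t * be^2))
    by (unfold X, be; field; repeat split; lra).
  apply (Rmult_le_reg_l t); auto.
  assert (t * (al * be) <= t * (X * be)) by (apply Rmult_le_compat_l; nra).
  replace (t * (/ 2 * (t * X ^ 2 + / t * be ^ 2))) with (/2 * ((t*X)^2 + be^2)) by (field; lra).
  assert (0 <= (t*X - be)^2) by apply pow2_ge_0.
  assert ((t*X)^2 + be^2 >= 2*(t*(X*be))) by nra. lra.
Qed.

Lemma lin_ex (x y : R) (A B : nat -> R) : ex_series A -> ex_series B ->
  ex_series (fun m => /2 * (x * A m + y * B m)).
Proof.
  intros HA HB. apply exs_scal. apply (ex_series_plus (fun m => x * A m) (fun m => y * B m));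
  apply exs_scal; auto.
Qed.

Lemma lin_ser (x y : R) (A B : nat -> R) : ex_series A -> ex_series B ->
  Series (fun m => /2 * (x * A m + y * B m)) = /2 * (x * Series A + y * Series B).
Proof.
  intros HA HB. rewrite Series_scal_l, Series_plus by (apply exs_scal; auto).
  rewrite !Series_scal_l. reflexivity.
Qed.

Lemma im_le_Cmod' (v : C) : Rabs (Im v) <= Cmod v.
Proof.
  destruct v as [x y]. unfold Cmod, Im; simpl. rewrite <- sqrt_Rsqr_abs.
  apply sqrt_le_1_alt. unfold Rsqr. nra.
Qed.

Theorem theorem7 :
  forall (sigma : nat) (a : C), Cmod a < 1 ->
  exists K : R,
    forall c : nat -> C, in_H2sigma sigma c ->
    forall n : nat, (1 <= n)%nat ->
      Cmod (H2inner c (kcoef_normalized n a))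
        <= K * / (INR n ^ sigma) * H2sigma_norm sigma c.
Proof.
  intros sigma a Ha. exists 1. intros c Hc n Hn.
  set (s := INR n ^ sigma).
  assert (Hs : 0 < s) by (apply pow_lt, lt_0_INR; lia).
  set (K := fun m => Cmod (kcoef n a m) ^ 2).
  assert (HK : ex_series K) by (apply kcoef_sq_series; auto).
  set (SK := Series K).
  assert (HKpos : forall m, 0 <= K m) by (intros; apply pow2_ge_0).
  assert (HSK : 0 < SK).
  { unfold SK. rewrite (Series_incr_n K (S n)) by (lia || auto).
    assert (0 <= Series (fun k => K (S n + k)%nat)).
    { rewrite <- Series_zero. apply Series_le.
      - intros; split; [lra | apply HKpos].
      - apply (proj1 (ex_series_incr_n K (S n))); auto. }
    simpl pred. destruct n as [|n']; [lia|]. simpl sum_f_R0.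
    assert (0 <= sum_f_R0 K n') by (apply cond_pos_sum; auto).
    assert (0 < K (S n')).
    { unfold K. replace (S n') with (S n' + 0)%nat at 2 by lia. rewrite kcoef_mod.
      rewrite pow_O, Rmult_1_r. apply pow_lt.
      apply Rdiv_lt_0_compat; apply INR_fact_pos. }
    lra. }
  set (N := H2norm (kcoef n a)).
  assert (HNN : N * N = SK) by (apply sqrt_sqrt; lra).
  assert (HN : 0 < N) by (apply sqrt_lt_R0; auto).
  set (Bm := fun m => (sob_weight sigma m * Cmod (c m)) ^ 2).
  assert (HBm : ex_series Bm) by exact Hc.
  set (B := Series Bm).
  assert (HB : 0 <= B).
  { unfold B. rewrite <- Series_zero. apply Series_le; auto. intros; split; [lra|apply pow2_ge_0]. }
  set (z := fun m => (c m * Cconj (kcoef_normalized n a m))%C).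
  assert (Hz : forall m, Cmod (z m) = Cmod (c m) * (Cmod (kcoef n a m) / N)).
  { intros m. unfold z, kcoef_normalized. change (H2norm (kcoef n a)) with N. rewrite Cmod_mult, Cmod_conj, Cmod_div.
    - rewrite Cmod_R, Rabs_pos_eq by lra. reflexivity.
    - intros E. injection E. lra. }
  set (bound := fun t m => /2 * (t / (s*s) * Bm m + /(t*SK) * K m)).
  assert (Hbound : forall t m, 0 < t -> Cmod (z m) <= bound t m).
  { intros t m Ht. rewrite Hz. unfold bound.
    destruct (Nat.lt_ge_cases m n) as [Hmn|Hmn].
    - rewrite kcoef_lt by auto. rewrite Cmod_0. unfold Rdiv. rewrite Rmult_0_l, Rmult_0_r.
      assert (0 <= Bm m) by apply pow2_ge_0.
      assert (0 <= t / (s*s) * Bm m) by (apply Rmult_le_pos; auto; apply Rle_mult_inv_pos; nra).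
      assert (0 <= /(t*SK) * K m) by (apply Rmult_le_pos; auto; left; apply Rinv_0_lt_compat; nra).
      lra.
    - unfold Bm, K. rewrite <- HNN.
      apply amgm; auto using Cmod_ge_0.
      unfold sob_weight, s.
      assert (INR n ^ sigma <= INR m ^ sigma) by (apply pow_incr; split; [apply pos_INR| apply le_INR; auto]).
      pose proof (Cmod_ge_0 (c m)). nra. }
  assert (Hexb : forall t, ex_series (bound t)) by (intros; apply lin_ex; auto).
  assert (Hserb : forall t, 0 < t -> Series (bound t) = /2 * (t / (s*s) * B + / t)).
  { intros t Ht. unfold bound. rewrite lin_ser by auto. fold B SK. field. split; lra. }
  assert (HexRe : ex_series (fun m => Re (z m))).
  { apply (@ex_series_le R_AbsRing R_CompleteNormedModule _ (bound 1)); auto.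
    intros m. change (norm (Re (z m))) with (Rabs (Re (z m))).
    eapply Rle_trans. apply re_le_Cmod. apply Hbound; lra. }
  assert (HexIm : ex_series (fun m => Im (z m))).
  { apply (@ex_series_le R_AbsRing R_CompleteNormedModule _ (bound 1)); auto.
    intros m. change (norm (Im (z m))) with (Rabs (Im (z m))).
    eapply Rle_trans. apply im_le_Cmod'. apply Hbound; lra. }
  unfold H2inner. fold z.
  change (fun k => Re (c k * Cconj (kcoef_normalized n a k))%C) with (fun k => Re (z k)).
  change (fun k => Im (c k * Cconj (kcoef_normalized n a k))%C) with (fun k => Im (z k)).
  set (p := Series (fun k => Re (z k))). set (q := Series (fun k => Im (z k))).
  set (r := Cmod (p, q)).
  assert (Hr : r = sqrt (p^2 + q^2)) by reflexivity.
  assert (Hr0 : 0 <= r) by apply Cmod_ge_0.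
  assert (Hrr : r * r = p^2 + q^2) by (rewrite Hr; apply sqrt_sqrt; nra).
  assert (Key : forall t, 0 < t -> r * r <= r * (/2 * (t / (s*s) * B + / t))).
  { intros t Ht. rewrite Hrr.
    replace (p^2 + q^2) with (Series (fun m => p * Re (z m) + q * Im (z m))).
    2:{ rewrite Series_plus by (apply exs_scal; auto). rewrite !Series_scal_l. fold p q. ring. }
    rewrite <- Hserb by auto. rewrite <- Series_scal_l.
    apply Series_le_gen.
    - apply (ex_series_plus (fun m => p * Re (z m)) (fun m => q * Im (z m))); apply exs_scal; auto.
    - apply exs_scal; auto.
    - intros m. eapply Rle_trans; [apply (pq_lemma p q 0)|]. rewrite <- Hr.
      apply Rmult_le_compat_l; auto. }
  unfold H2sigma_norm. fold Bm B. fold s. rewrite Rmult_1_l. fold r.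
  destruct (Req_dec r 0) as [E|E].
  - rewrite E. apply Rmult_le_pos. left; apply Rinv_0_lt_compat; auto. apply sqrt_pos.
  - apply fin_lemma; auto. intros t Ht. specialize (Key t Ht).
    apply (Rmult_le_reg_l r); [lra|]. lra.
Qed.
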